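(* For every fixed $m\ge 2$, \[s\text{-}sat(Q_n,Q_m)\ge\Big(\frac{m+1}{2}-o(1)\Big)2^n\quad\text{as } n\to\infty.\]
   Context: $Q_n$ is the hypercube on $\{0,1\}^n$ with edges between vertices differing in exactly one coordinate. A copy of $F$ is a subgraph isomorphic to $F$. A graph $G$ is $(Q_n,F)$-semi-saturated if $G\subseteq Q_n$ and adding any edge of $E(Q_n)\setminus E(G)$ increases the number of copies of $F$. $s\text{-}sat(Q_n,F)$ is the minimum number of edges of a $(Q_n,F)$-semi-saturated graph. *)

(* Defs.v *)
From HB Require Import structures.
From mathcomp Require Import all_boot all_order all_algebra.
Unset Printing Implicit Defensive.

Definition vert (n : nat) := {ffun 'I_n -> bool}.

Definition cube_adj (n : nat) (u v : vert n) : bool :=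
  #|[set i : 'I_n | u i != v i]| == 1.

Definition cube_edges (n : nat) : {set {set vert n}} :=
  [set e : {set vert n} | [exists u : vert n, exists v : vert n,
      cube_adj n u v && (e == [set u; v])]].

(* A copy of Q_m in the graph (V(Q_n), E): a subgraph (A, S), with S a set of
   edges of E, which is isomorphic to Q_m, i.e. there is an injection
   f : V(Q_m) -> V(Q_n) mapping V(Q_m) onto A and E(Q_m) onto S. *)
Definition is_copy (n m : nat) (E : {set {set vert n}})
    (H : {set vert n} * {set {set vert n}}) : bool :=
  (H.2 \subset E) &&
  [exists f : {ffun vert m -> vert n},
     [&& injectiveb f,
         H.1 == f @: [set: vert m] &
         H.2 == [set (f @: e) | e : {set vert m} in cube_edges m]]].

Definition ncopies (n m : nat) (E : {set {set vert n}}) : nat :=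
  #|[set H | is_copy n m E H]|.

Definition semisat (n m : nat) (E : {set {set vert n}}) : bool :=
  (E \subset cube_edges n) &&
  [forall e in cube_edges n :\: E, ncopies n m E < ncopies n m (e |: E)].

Lemma semisat_full (n m : nat) : semisat n m (cube_edges n).
Proof.
apply/andP; split=> //; apply/forall_inP=> e.
by rewrite setDv inE.
Qed.

Lemma exists_semisat_size (n m : nat) :
  exists k, [exists E : {set {set vert n}}, semisat n m E && (#|E| == k)].
Proof.
exists #|cube_edges n|; apply/existsP; exists (cube_edges n).
by rewrite semisat_full eqxx.
Qed.

Definition ssat (n m : nat) : nat := ex_minn (exists_semisat_size n m).

(* Main.v *)
Require Import Defs.
From HB Require Import structures.
From mathcomp Require Import all_boot all_order all_algebra.
From mathcomp Require Import zify ring lra.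
Set Implicit Arguments. Unset Strict Implicit.


Section S.
Variable n : nat.

Definition flip (u : vert n) (i : 'I_n) : vert n :=
  [ffun k => if k == i then ~~ u k else u k].

Lemma flipE u i k : flip u i k = if k == i then ~~ u k else u k.
Proof. by rewrite ffunE. Qed.

Lemma flipK u i : flip (flip u i) i = u.
Proof. apply/ffunP=> k; rewrite !flipE; case: eqP => //; by rewrite negbK. Qed.

Lemma flipC u i j : flip (flip u i) j = flip (flip u j) i.
Proof. apply/ffunP=> k; rewrite !flipE; by case: (k == i); case: (k == j). Qed.

Lemma flip_neq u i : flip u i != u.
Proof. apply/eqP=> /ffunP /(_ i); rewrite flipE eqxx; by case: (u i). Qed.

Lemma flip_inj u i j : flip u i = flip u j -> i = j.
Proof.
move=> /ffunP /(_ i); rewrite !flipE eqxx; case: eqP => // _; by case: (u i).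
Qed.

Lemma flip_injl u w i : flip u i = flip w i -> u = w.
Proof. by move=> h; rewrite -(flipK u i) h flipK. Qed.

Lemma adj_flip u i : cube_adj n u (flip u i).
Proof.
rewrite /cube_adj; apply/eqP; rewrite -(cards1 i); apply: eq_card => k.
rewrite !inE flipE; case: (k =P i) => _; [by case: (u k)| by rewrite eqxx].
Qed.

Lemma adjP u v : cube_adj n u v -> exists i, v = flip u i.
Proof.
rewrite /cube_adj => /cards1P [i hi]; exists i; apply/ffunP => k.
rewrite flipE; have : (k \in [set i | u i != v i]) = (k \in [set i]) by rewrite hi.
rewrite !inE.
case: (k =P i) => [-> | _].
  by case: (u i); case: (v i).
by move/negbFE/eqP.
Qed.

Lemma cube_edgesP e : reflect (exists u i, e = [set u; flip u i]) (e \in cube_edges n).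
Proof.
rewrite inE; apply: (iffP existsP).
  move=> [u /existsP [v /andP [/adjP [i ->] /eqP ->]]]; by exists u, i.
move=> [u [i ->]]; exists u; apply/existsP; exists (flip u i).
by rewrite adj_flip eqxx.
Qed.

Lemma edge_end u w : [set u; w] \in cube_edges n -> exists a, w = flip u a.
Proof.
move/cube_edgesP=> [x [i he]].
have hx : x \in [set u; w] by rewrite he set21.
have hy : flip x i \in [set u; w] by rewrite he set22.
move: hx hy; rewrite !inE => /orP [] /eqP hx /orP [] /eqP hy.
- by move: (flip_neq x i); rewrite hy hx eqxx.
- by exists i; rewrite -hy hx.
- by exists i; rewrite -hy -hx flipK.
- by move: (flip_neq x i); rewrite hy hx eqxx.
Qed.

Definition edge (E : {set {set vert n}}) u i := [set u; flip u i] \in E.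

Lemma edge_sym E u i : edge E (flip u i) i = edge E u i.
Proof. by rewrite /edge flipK setUC. Qed.

Definition deg E u := #|[set i | edge E u i]|.

Lemma card_sumT (T : finType) (P : pred T) : #|[set i | P i]| = \sum_i (P i : nat).
Proof.
rewrite -sum1_card big_mkcond /=; apply: eq_bigr => i _; rewrite inE; by case: (P i).
Qed.

Lemma cardsum_in (T : finType) (B : {set T}) (P : pred T) :
  #|[set j in B | P j]| = \sum_(j in B) (P j : nat).
Proof.
rewrite -sum1_card big_mkcond /= [RHS]big_mkcond /=; apply: eq_bigr => i _.
rewrite inE; by case: (i \in B); case: (P i).
Qed.

End S.


Section K.
Variable n : nat.

Lemma cj (u : vert n) a b c j : flip (flip u a) c = flip (flip u j) b ->
  a != j -> flip (flip u a) c != u -> c = j.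
Proof.
move=> h aj hu; apply/eqP; apply: contraNT hu => ncj.
case: (j =P b) => [hb|hb].
  by rewrite h -hb flipK.
move/ffunP: (h) => /(_ j); rewrite !flipE eqxx (eq_sym j c) (negbTE ncj).
rewrite (eq_sym j a) (negbTE aj); case: eqP => // _; by case: (u j).
Qed.

Lemma key m E (hs : semisat n m E) (u : vert n) j : ~~ edge E u j ->
  m.-1 <= #|[set a | [&& edge E u a, edge E (flip u a) j & edge E (flip u j) a]]|.
Proof.
move: hs => /andP [sub /forall_inP hall] nej.
set v := flip u j; set e := [set u; v].
have eC : e \in cube_edges n by apply/cube_edgesP; exists u, j.
have lt : ncopies n m E < ncopies n m (e |: E) by apply: hall; rewrite inE nej eC.
have [H /andP [H1 H2]] : exists H, is_copy n m (e |: E) H && ~~ is_copy n m E H.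
  apply/existsP; apply: contraLR lt; rewrite -leqNgt => /existsPn hno.
  apply: subset_leq_card; apply/subsetP => H; rewrite !inE => hH.
  by have := hno H; rewrite hH /= negbK.
move: H1 => /andP [sub1 hex].
have eH : e \in H.2.
  apply: contraNT H2 => neH; rewrite /is_copy hex andbT.
  apply/subsetP => x xH; move: (subsetP sub1 x xH); rewrite in_setU1.
  by move=> /orP [/eqP xe|//]; move: neH; rewrite -xe xH.
move: hex => /existsP [f /and3P [/injectiveP finj _ /eqP h2]].
have FE : forall x i, [set f x; f (flip x i)] \in e |: E.
  move=> x i; apply: (subsetP sub1); rewrite h2; apply/imsetP.
  exists [set x; flip x i]; first by apply/cube_edgesP; exists x, i.
  by rewrite imsetU1 imset_set1.
move: eH; rewrite h2 => /imsetP [e' /cube_edgesP [p [k ->]] he].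
rewrite imsetU1 imset_set1 in he.
have [p0 [k0 [hp hq]]] : exists p0 k0, f p0 = u /\ f (flip p0 k0) = v.
  have : u \in e by rewrite set21.
  have : v \in e by rewrite set22.
  rewrite he !inE => /orP[]/eqP hv /orP[]/eqP hu.
  - by move: (flip_neq u j); rewrite -/v hv hu eqxx.
  - by exists (flip p k), k; rewrite flipK.
  - by exists p, k.
  - by move: (flip_neq u j); rewrite -/v hv hu eqxx.
clear he p k.
have inE' : forall x y z, z != p0 -> z != flip p0 k0 -> z \in [set x; y] ->
    [set f x; f y] \in e |: E -> [set f x; f y] \in E.
  move=> x y z zp zq zxy; rewrite in_setU1 => /orP [/eqP hxy|//]; exfalso.
  have : f z \in e.
    rewrite -hxy; move: zxy; rewrite !inE => /orP [] /eqP ->; by rewrite eqxx ?orbT.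
  rewrite /e !inE -hp -hq => /orP [] /eqP /finj hz.
  - by rewrite hz eqxx in zp.
  - by rewrite hz eqxx in zq.
set A := [set a | _].
have sb : [set f (flip p0 i) | i in [set~ k0]] \subset [set flip u a | a in A].
  apply/subsetP => _ /imsetP [i ik ->]; rewrite in_setC1 in ik.
  set r := flip p0 i; set s := flip r k0.
  have hs' : flip (flip p0 k0) i = s by rewrite /s /r flipC.
  have rp : r != p0 by apply: flip_neq.
  have rq : r != flip p0 k0 by apply/eqP => /flip_inj hik; rewrite hik eqxx in ik.
  have sp : s != p0.
    apply/eqP => hsp; move: (flipK r k0); rewrite -/s hsp => /flip_inj hik.
    by rewrite hik eqxx in ik.
  have sq : s != flip p0 k0 by rewrite -hs' flip_neq.
  have E1 : [set f p0; f r] \in E by apply: (inE' _ _ r rp rq); rewrite ?set22 ?FE.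
  have E2 : [set f r; f s] \in E by apply: (inE' _ _ r rp rq); rewrite ?set21 ?FE.
  have E3 : [set f (flip p0 k0); f s] \in E.
    by apply: (inE' _ _ s sp sq); rewrite ?set22 // -hs' FE.
  have [a ha] := edge_end (subsetP sub _ E1); rewrite hp in ha.
  have [c hc] := edge_end (subsetP sub _ E2).
  have [b hb] := edge_end (subsetP sub _ E3); rewrite hq in hb.
  have aj : a != j.
    apply/eqP => haj; move: ha; rewrite haj -/v -hq => /finj hh; by rewrite hh eqxx in rq.
  have su : f s != u by apply/eqP; rewrite -hp => /finj hh; rewrite hh eqxx in sp.
  have ecj : c = j.
    apply: (cj (u := u) (b := b) _ aj); first by rewrite -ha -hc -/v -hb.
    by rewrite -ha -hc.

  subst c.
  apply/imsetP; exists a => //; rewrite inE; apply/and3P; split.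
  - by rewrite /edge -ha -hp.
  - by rewrite /edge -ha -hc.
  - by rewrite /edge /v flipC -ha -hc -/v -hq.
have := leq_trans (subset_leq_card sb) (leq_imset_card _ _).
rewrite card_imset; last by move=> x y /finj /flip_inj.
by rewrite cardsC1 card_ord.
Qed.

End K.


Section D.
Variables (n m : nat) (E : {set {set vert n}}).
Hypothesis hs : semisat n m E.
Hypothesis hm : 2 <= m.

Let A u j := [set a | [&& edge E u a, edge E (flip u a) j & edge E (flip u j) a]].

Lemma AD u j : A u j \subset [set i | edge E u i].
Proof. by apply/subsetP => a; rewrite !inE => /and3P []. Qed.

Lemma degF1 u : m.-1 <= n -> m.-1 <= deg E u.
Proof.
move=> hmn.
case: (boolP [forall i, edge E u i]) => [/forallP hall | /forallPn [j nej]].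
  have -> : deg E u = n; last by [].
  rewrite /deg; have -> : [set i | edge E u i] = setT by apply/setP => i; rewrite !inE hall.
  by rewrite cardsT card_ord.
apply: leq_trans (key hs nej) _; exact: subset_leq_card (AD u j).
Qed.

Lemma degF2 u a : deg E u = m.-1 -> edge E u a -> n - m.-1 <= deg E (flip u a).
Proof.
move=> hd ea.
have sb : [set j | ~~ edge E u j] \subset [set j | edge E (flip u a) j].
  apply/subsetP => j; rewrite inE => nej; have hk := key hs nej.
  have : A u j == [set i | edge E u i].
    by rewrite eqEcard AD /=; rewrite /deg in hd; rewrite hd.
  move/eqP => hA; have : a \in A u j by rewrite hA inE.
  by rewrite /A !inE => /and3P [_ ? _].
apply: leq_trans (subset_leq_card sb).
rewrite cardsCs card_ord.
have -> : ~: [set j | ~~ edge E u j] = [set j | edge E u j]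
  by apply/setP=> j; rewrite !inE negbK.
by rewrite /deg in hd; rewrite hd.
Qed.

Lemma degF3 u T : deg E u = m -> m * T < (n - m) * m.-1 + m ->
  exists2 a, edge E u a & T <= deg E (flip u a).
Proof.
move=> hd hT.
case: (boolP [exists a, edge E u a && (T <= deg E (flip u a))]) =>
  [/existsP [a /andP [? ?]]|/existsPn hno]; first by exists a.
exfalso; set D := [set i | edge E u i].
have hD : #|D| = m by [].
have up : \sum_(a in D) (deg E (flip u a) + 1) <= m * T.
  apply: leq_trans (_ : \sum_(a in D) T <= _).
    apply: leq_sum => a; rewrite inE => ha; have := hno a; rewrite ha /= -ltnNge.
    by rewrite addn1.
  by rewrite sum_nat_const hD.
rewrite big_split /= sum1_card hD in up.
have low : (n - m) * m.-1 <= \sum_(a in D) deg E (flip u a).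
  have step1 : forall a, \sum_(j in ~: D) (edge E (flip u a) j : nat) <= deg E (flip u a).
    move=> a; rewrite /deg -cardsum_in; apply: subset_leq_card.
    by apply/subsetP => j; rewrite !inE => /andP [].
  apply: leq_trans (_ : \sum_(a in D) \sum_(j in ~: D) (edge E (flip u a) j : nat) <= _);
    last by apply: leq_sum => a _; apply: step1.
  rewrite exchange_big /=.
  apply: leq_trans (_ : \sum_(j in ~:D) m.-1 <= _).
    rewrite sum_nat_const; have := cardsC D; rewrite card_ord hD => h.
    by have -> : #|~: D| = n - m by lia.
  apply: leq_sum => j; rewrite inE => nj.
  rewrite -cardsum_in; apply: leq_trans (key hs (u := u) (j := j) _) _; first by move: nj; rewrite !inE.
  apply: subset_leq_card; apply/subsetP => a; rewrite !inE => /and3P [-> -> _].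
  by [].
move: up low hT; set X := \sum_(a in D) _; set Y := (n - m) * m.-1; set Z := m * T; lia.
Qed.

End D.


Section F.
Variables (n m : nat) (E : {set {set vert n}}).
Hypothesis hs : semisat n m E.
Hypothesis hm : 2 <= m.
Hypothesis hmn : m <= n.
Variable T : nat.
Hypothesis hT1 : T <= n - m.-1.
Hypothesis hT2 : m * T < (n - m) * m.-1 + m.

Lemma degF4 x : \sum_i (edge E x i && (deg E (flip x i) == 1) : nat) <= (T <= deg E x).
Proof.
case: (boolP [exists i, edge E x i && (deg E (flip x i) == 1)]) =>
  [/existsP [i /andP [exi /eqP d1]] | /existsPn hno]; last first.
  by rewrite big1 // => i _; have := hno i; case: (_ && _).
set u := flip x i.
have m2 : m = 2 by have := degF1 hs u (leq_trans (leq_pred m) hmn); rewrite -/u d1; lia.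
have eu : edge E u i by rewrite /u edge_sym.
have bg : T <= deg E x.
  have h2 : deg E u = m.-1 by rewrite d1 m2.
  have := degF2 hs h2 eu; rewrite /u flipK.
  exact: leq_trans.
rewrite bg.
apply: leq_trans (_ : \sum_i' ((i' == i) : nat) <= 1); last first.
  rewrite -(card_sumT (fun i' => i' == i)).
  have -> : [set i' | i' == i] = [set i] by apply/setP => z; rewrite !inE.
  by rewrite cards1.
apply: leq_sum => i' _.
case: (boolP (edge E x i' && (deg E (flip x i') == 1))) => // /andP [exi' /eqP d1'].
case: (i' =P i) => // ne; exfalso.
have Du : [set a | edge E u a] = [set i].
  apply/esym/eqP; rewrite eqEcard sub1set inE eu cards1 /=.
  by rewrite /deg in d1; rewrite d1.
have nue : ~~ edge E u i'.
  have : i' \notin [set i] by rewrite inE; apply/eqP.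
  by rewrite -Du inE.
have hk := key hs nue; rewrite m2 /= in hk.
have [a ha] := card_gt0P hk.
have : a \in [set a | edge E u a] by move: ha; rewrite !inE => /and3P [].
rewrite Du inE => /eqP ea; subst a.
move: ha; rewrite inE => /and3P [_ _ e3].
have e3' : edge E (flip x i') i.
  by rewrite -edge_sym; move: e3; rewrite /u flipC.
have e4 : edge E (flip x i') i' by rewrite edge_sym.
have : #|[set i; i']| <= deg E (flip x i').
  by apply: subset_leq_card; apply/subsetP => z; rewrite !inE => /orP [] /eqP ->.
rewrite cards2 d1'; case: eqP => // hii; by rewrite hii in ne.
Qed.


Lemma swap (G : vert n -> 'I_n -> nat) :
  \sum_u \sum_i G u i = \sum_u \sum_i G (flip u i) i.
Proof.
rewrite !pair_bigA /=.
rewrite (reindex_inj (h := fun p : vert n * 'I_n => (flip p.1 p.2, p.2))) //=.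
by move=> [a i] [b j] [h1 h2]; subst; rewrite (flip_injl h1).
Qed.

Lemma degS x : deg E x = \sum_i (edge E x i : nat).
Proof. by rewrite /deg card_sumT. Qed.

Definition bcount u := \sum_i (edge E u i && (T <= deg E (flip u i)) : nat).

Lemma smallb u : ~~ (T <= deg E u) -> m.+1 <= deg E u + bcount u + (deg E u == 1).
Proof.
move=> sm.
have h1 := degF1 hs u (leq_trans (leq_pred m) hmn).
case: (ltngtP (deg E u) m) => [lt|gt|eq].
- have d : deg E u = m.-1 by lia.
  have hb : bcount u = deg E u.
    rewrite /bcount /deg card_sumT; apply: eq_bigr => i _.
    case: (boolP (edge E u i)) => //= ei.
    by rewrite (leq_trans hT1) // degF2.
  rewrite hb d; case: (m.-1 =P 1) => /= ?; lia.
- lia.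
- have [a ea ba] := degF3 hs hm eq hT2.
  have : 1 <= bcount u by rewrite /bcount (bigD1 a) //= ea ba.
  lia.
Qed.

Lemma count_main : m.+1 * T * 2 ^ n <= (\sum_u deg E u) * (T + m + 2).
Proof.
set S := \sum_u deg E u.
set B := \sum_u ((T <= deg E u) : nat).
set Sm := \sum_u (~~ (T <= deg E u) : nat).
have hBS : Sm + B = 2 ^ n.
  rewrite /Sm /B -big_split /=.
  rewrite (eq_bigr (fun _ => 1)); last by move=> u _; case: (T <= deg E u).
  by rewrite sum1_card card_ffun card_bool card_ord.
have hTB : T * B <= S.
  rewrite /B big_distrr /=; apply: leq_sum => u _.
  by case: (boolP (T <= deg E u)) => /= h; rewrite ?muln1 ?muln0.
have hc : \sum_u (~~ (T <= deg E u)) * bcount u <= \sum_u (T <= deg E u) * deg E u.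
  have -> : \sum_u (~~ (T <= deg E u)) * bcount u =
     \sum_u \sum_i ((edge E u i && (T <= deg E (flip u i))) && ~~ (T <= deg E u) : nat).
    apply: eq_bigr => u _; rewrite /bcount big_distrr /=; apply: eq_bigr => i _.
    by rewrite mulnb andbC.
  rewrite swap; apply: leq_sum => x _.
  case: (boolP (T <= deg E x)) => hb; rewrite ?mul1n ?mul0n.
    rewrite [X in _ <= X]degS; apply: leq_sum => i _.
    by rewrite edge_sym; case: (edge E x i); rewrite /= ?leq_b1.
  rewrite big1 // => i _; by rewrite flipK (negbTE hb) andbF.
have hd : \sum_u ((deg E u == 1) : nat) <= B.
  apply: leq_trans (_ : \sum_u \sum_i (edge E u i && (deg E u == 1) : nat) <= _).
    apply: leq_sum => u _; case: (boolP (deg E u == 1)) => //= /eqP d1.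
    rewrite (eq_bigr (fun i => (edge E u i : nat))); last by move=> i _; rewrite andbT.
    by rewrite -card_sumT -/(deg E u) d1.
  rewrite swap; apply: leq_sum => x _.
  rewrite (eq_bigr (fun i => (edge E x i && (deg E (flip x i) == 1) : nat))).
    exact: degF4.
  by move=> i _; rewrite edge_sym.
have hsplit : S = \sum_u (~~ (T <= deg E u)) * deg E u + \sum_u (T <= deg E u) * deg E u.
  rewrite /S -big_split /=; apply: eq_bigr => u _; by case: (T <= deg E u); rewrite /= ?mul0n ?mul1n ?addn0.
have hm1 : m.+1 * Sm <= S + B.
  apply: leq_trans (_ : \sum_u (~~ (T <= deg E u)) * (deg E u + bcount u + (deg E u == 1)) <= _).
    rewrite /Sm big_distrr /=; apply: leq_sum => u _.
    case: (boolP (T <= deg E u)) => /= sm; rewrite ?mul1n ?muln1 ?mul0n ?muln0 //; exact: smallb.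
  have -> : \sum_u (~~ (T <= deg E u)) * (deg E u + bcount u + (deg E u == 1)) =
     \sum_u (~~ (T <= deg E u)) * deg E u + \sum_u (~~ (T <= deg E u)) * bcount u
     + \sum_u (~~ (T <= deg E u)) * (deg E u == 1).
    by rewrite -!big_split /=; apply: eq_bigr => u _; rewrite !mulnDr.
  have h4 : \sum_u (~~ (T <= deg E u)) * (deg E u == 1) <= \sum_u ((deg E u == 1) : nat).
    by apply: leq_sum => u _; case: (~~ _); rewrite ?mul1n ?mul0n.
  move: hsplit hc hd h4.
  set X1 := \sum_u (~~ (T <= deg E u)) * deg E u.
  set X2 := \sum_u (T <= deg E u) * deg E u.
  set X3 := \sum_u (~~ (T <= deg E u)) * bcount u.
  set X4 := \sum_u (~~ (T <= deg E u)) * (deg E u == 1).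
  set X5 := \sum_u ((deg E u == 1) : nat).
  lia.
rewrite -hBS.
move: hm1 hTB; set P := m.+1; nia.
Qed.

End F.


Lemma handshake n (E : {set {set vert n}}) : \sum_u deg E u <= 2 * #|E|.
Proof.
set g := fun p : vert n * 'I_n => [set p.1; flip p.1 p.2].
have -> : \sum_u deg E u = \sum_(p | g p \in E) 1.
  rewrite (eq_bigr (fun u => \sum_i (edge E u i : nat))); last by move=> u _; rewrite /deg card_sumT.
  rewrite pair_bigA /= [RHS]big_mkcond /=; apply: eq_bigr => p _.
  by rewrite /edge /g; case: (_ \in E).
rewrite (partition_big g (fun e => e \in E)) //=.
apply: leq_trans (_ : \sum_(e in E) 2 <= _); last by rewrite sum_nat_const mulnC.
apply: leq_sum => e _.
rewrite sum1dep_card.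
set Fb := [set p | _].
case: (set_0Vmem Fb) => [->|[p0 hp0]]; first by rewrite cards0.
have ge : forall p, p \in Fb -> g p = e by move=> p; rewrite inE => /andP [_ /eqP].
rewrite -(card_in_imset (f := fst)); last first.
  move=> [y i1] [y' i2] /ge h1 /ge h2 /= hy; subst y'.
  have : flip y i1 \in g (y, i2) by rewrite h2 -h1 set22.
  rewrite !inE => /orP [/eqP h|/eqP /flip_inj -> //].
  by move: (flip_neq y i1); rewrite h eqxx.
apply: leq_trans (_ : #|e| <= 2).
  apply: subset_leq_card; apply/subsetP => _ /imsetP [p hp ->].
  by rewrite -(ge p hp) set21.
by rewrite -(ge p0 hp0) cards2; case: (_ != _).
Qed.

Import Order.TTheory GRing.Theory Num.Theory.
Local Open Scope ring_scope.

Theorem theorem4 (m : nat) (hm : (2 <= m)%N) :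
  forall eps : rat, 0 < eps ->
  exists N : nat, forall n : nat, (N <= n)%N ->
    ((m.+1)%:R / 2 - eps) * (2 ^ n)%:R <= (ssat n m)%:R :> rat.
Proof.
move=> eps he.
set x : rat := ((m.+1 * m.+2)%N)%:R / (2 * eps).
have x0 : 0 <= x by rewrite /x divr_ge0 // ?mulr_ge0 // ltW.
have hK := archi_boundP x0.
set K := Num.Def.archi_bound x in hK.
exists (m + 2 * K + 2)%N => n hn.
set T := ((n - m) %/ 2)%N.
have hKT : (K <= T)%N by rewrite /T; lia.
have hmn : (m <= n)%N by lia.
have hT1 : (T <= n - m.-1)%N by rewrite /T; lia.
have hT2 : (m * T < (n - m) * m.-1 + m)%N.
  have h2T : (2 * T <= n - m)%N by rewrite /T; lia.
  have : (2 * (m * T) <= m * (n - m))%N.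
    by rewrite mulnCA; apply: leq_mul.
  have : (m * (n - m) <= 2 * ((n - m) * m.-1))%N.
    rewrite mulnCA [(m * _)%N]mulnC leq_mul2l; apply/orP; right; lia.
  move: (m * T)%N ((n - m) * m.-1)%N (m * (n - m))%N => X Y Z; lia.
rewrite /ssat; case: ex_minnP => k /existsP [E /andP [hsE /eqP hk]] _.
have hc := count_main hsE hm hmn hT1 hT2.
have hh := handshake E; rewrite hk in hh.
have hnat : (m.+1 * T * 2 ^ n <= 2 * k * (T + m + 2))%N.
  apply: leq_trans hc _; rewrite leq_mul2r; apply/orP; right; exact: hh.
have hr : (m.+1)%:R * T%:R * (2 ^ n)%:R <= 2 * k%:R * (T%:R + m%:R + 2) :> rat.
  by move: hnat; rewrite -(ler_nat rat) !natrM !natrD.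
have hKT' : x < T%:R by apply: lt_le_trans hK _; rewrite ler_nat.
have hx : ((m.+1 * m.+2)%N)%:R < 2 * eps * T%:R :> rat.
  by move: hKT'; rewrite /x ltr_pdivrMr ?mulr_gt0 // mulrC.
have ha1 : (m.+1)%:R = m%:R + 1 :> rat by rewrite -addn1 natrD.
have ha2 : (m.+2)%:R = m%:R + 2 :> rat by rewrite -addn2 natrD.
rewrite natrM ha1 ha2 in hx; rewrite ha1 in hr *.
have P0 : 0 <= (2 ^ n)%:R :> rat by [].
have t0 : 0 <= T%:R :> rat by [].
have a0 : 0 <= m%:R :> rat by [].
move: hr hx P0 t0 a0.
move: (2 ^ n)%:R (T%:R) (m%:R) (k%:R) => P t a kk hr hx P0 t0 a0.
have pos : 0 < t + a + 2 by lra.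
rewrite -(ler_pM2r pos).
have h3 : (a + 1) * (a + 2) * P <= 2 * eps * t * P by rewrite ler_wpM2r // ltW.
have h4 : 0 <= eps * P * (a + 2) by rewrite !mulr_ge0 // ?ltW //; lra.
nra.
Qed.
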